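(* Let $A$ be $\mathbb{Z}$ or $\mathbb{Z}/n\mathbb{Z}$ for an integer $n\geq 2$, and $H_A=H_1(\Sigma_2;A)$, identified with $A^4$ via the basis $x_1,x_2,y_1,y_2$, with $v_i$ denoting the $i$-th coordinate of $v\in H_A$. Let $\alpha,\beta,\gamma,\delta$ be the generators of the genus-$2$ Goeritz group $\mathcal{E}_2$ described in the context. Then \[ H^1(\mathcal{E}_2;H_A)\cong \{d \in Z^{1}(\mathcal{E}_2;H_A) \;:\; d(\delta)_1 - d(\alpha)_1 = d(\gamma)_2 - d(\beta)_2 = d(\gamma)_3 - d(\alpha)_3 = d(\beta)_4 - d(\delta)_4 = 0 \}. \]
   Context: Let $S^3=H_2\cup H_2^*$ be a genus-$2$ Heegaard splitting with Heegaard surface $\Sigma_2=\partial H_2$. The genus-$2$ Goeritz group $\mathcal{E}_2$ is the group of isotopy classes $[f]$ of orientation-preserving homeomorphisms of $\Sigma_2$ for which there is an orientation-preserving self-homeomorphism $F$ of $S^3$ with $F(H_2)=H_2$ and $[F|_{\Sigma_2}]=[f]$; it acts on $H_A$ by induced maps. Fix a basis $x_1,x_2,y_1,y_2$ of $H_1(\Sigma_2;\mathbb{Z})$ (inducing one of $H_A$). $\mathcal{E}_2$ is generated by four elements $\alpha,\beta,\gamma,\delta$ acting as follows: $\alpha_*(x_i)=-x_i$, $\alpha_*(y_i)=-y_i$ ($i=1,2$); $\beta_*(x_1)=x_1$, $\beta_*(x_2)=-x_2$, $\beta_*(y_1)=y_1$, $\beta_*(y_2)=-y_2$; $\gamma_*(x_1)=-x_2$,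 $\gamma_*(x_2)=-x_1$, $\gamma_*(y_1)=-y_2$, $\gamma_*(y_2)=-y_1$; $\delta_*(x_1)=-x_1+x_2$, $\delta_*(x_2)=-x_1$, $\delta_*(y_1)=y_2$, $\delta_*(y_2)=-y_1-y_2$. $Z^1(\mathcal{E}_2;H_A)$ is the group of crossed homomorphisms $d:\mathcal{E}_2\to H_A$, i.e. maps with $d(\phi\psi)=d(\phi)+\phi\, d(\psi)$ for all $\phi,\psi\in\mathcal{E}_2$; $d(\alpha)$ etc. denote the values of $d$ on the classes of these generators, and $d(\phi)_i$ the $i$-th coordinate. $H^1(\mathcal{E}_2;H_A)$ is the first twisted group cohomology, equal to $Z^1(\mathcal{E}_2;H_A)$ modulo the principal crossed homomorphisms $\phi\mapsto \phi u-u$, $u\in H_A$. *)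

(* Defs.v *)
From HB Require Import structures.
From mathcomp Require Import all_boot all_order all_algebra.
Set Implicit Arguments. Unset Strict Implicit. Unset Printing Implicit Defensive.
Import GRing.Theory.
Local Open Scope ring_scope.

(* The genus-2 Goeritz group E_2 is not available in any library; it enters the
   statement as such a group, generated by four elements alpha, beta, gamma,
   delta, acting on H_A = A^4 with the prescribed action on generators. *)
Record group_str := GroupStr {
  carrier :> Type;
  gmul : carrier -> carrier -> carrier;
  gone : carrier;
  ginv : carrier -> carrier;
  gmulA : forall x y z, gmul x (gmul y z) = gmul (gmul x y) z;
  gmul1g : forall x, gmul gone x = x;
  gmulVg : forall x, gmul (ginv x) x = gone
}.

Inductive generated_by (G : group_str) (S : G -> Prop) : G -> Prop :=
| gen_one : generated_by S (gone G)
| gen_base g : S g -> generated_by S g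
| gen_inv g : generated_by S g -> generated_by S (ginv g)
| gen_mul g h : generated_by S g -> generated_by S h -> generated_by S (gmul g h).

(* H_A = A^4 as column vectors, coordinates w.r.t. x1, x2, y1, y2. *)
Definition HA (A : comNzRingType) := 'cV[A]_4.

(* i-th coordinate (1-based, i = 1..4). *)
Definition crd (A : comNzRingType) (v : HA A) (i : nat) : A := v (@inord 3 i.-1) ord0.

Definition is_action (A : comNzRingType) (G : group_str) (rho : G -> 'M[A]_4) :=
  rho (gone G) = 1%:M /\ forall g h, rho (gmul g h) = rho g *m rho h.

(* Matrices of the actions of the generators (columns = images of x1,x2,y1,y2). *)
Definition mat_alpha (A : comNzRingType) : 'M[A]_4 := - 1%:M.
Definition mat_beta (A : comNzRingType) : 'M[A]_4 :=
  \matrix_(i < 4, j < 4) if i == j then (if odd i then -1 else 1) else 0.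
Definition mat_gamma (A : comNzRingType) : 'M[A]_4 :=
  \matrix_(i < 4, j < 4)
    (* x1 -> -x2, x2 -> -x1, y1 -> -y2, y2 -> -y1 *)
    if ((i : nat), (j : nat)) \in [:: (1,0); (0,1); (3,2); (2,3)]%N then -1 else 0.
Definition mat_delta (A : comNzRingType) : 'M[A]_4 :=
  \matrix_(i < 4, j < 4)
    (* x1 -> -x1 + x2, x2 -> -x1, y1 -> y2, y2 -> -y1 - y2 *)
    if ((i : nat), (j : nat)) \in [:: (0,0); (0,1); (2,3); (3,3)]%N then -1
    else if ((i : nat), (j : nat)) \in [:: (1,0); (3,2)]%N then 1 else 0.

Definition crossed_hom (A : comNzRingType) (G : group_str) (rho : G -> 'M[A]_4)
  (d : G -> HA A) : Prop :=
  forall g h, d (gmul g h) = d g + rho g *m d h.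

Definition principal (A : comNzRingType) (G : group_str) (rho : G -> 'M[A]_4)
  (d : G -> HA A) : Prop :=
  exists u : HA A, forall g, d g = rho g *m u - u.

(* The statement of the lemma for a given coefficient ring A:
   for every group G generated by alpha, beta, gamma, delta acting on H_A as
   prescribed, the subgroup S of Z^1(G;H_A) cut out by the four linear
   conditions maps isomorphically onto H^1(G;H_A) = Z^1/B^1 under the
   natural map, i.e. every class has a representative in S (surjectivity)
   and two elements of S with principal difference coincide (injectivity). *)
Definition lemma2p3_for (A : comNzRingType) : Prop :=
  forall (G : group_str) (rho : G -> 'M[A]_4) (alpha beta gamma delta : G),
    is_action rho ->
    (forall g, generated_by (fun x => x = alpha \/ x = beta \/ x = gamma \/ x = delta) g) ->
    rho alpha = mat_alpha A -> rho beta = mat_beta A ->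
    rho gamma = mat_gamma A -> rho delta = mat_delta A ->
    let S := fun d : G -> HA A =>
      crossed_hom rho d /\
      crd (d delta) 1 - crd (d alpha) 1 = 0 /\
      crd (d gamma) 2 - crd (d beta) 2 = 0 /\
      crd (d gamma) 3 - crd (d alpha) 3 = 0 /\
      crd (d beta) 4 - crd (d delta) 4 = 0 in
    (forall d, crossed_hom rho d ->
       exists d', S d' /\ principal rho (fun g => d g - d' g)) /\
    (forall d1 d2, S d1 -> S d2 -> principal rho (fun g => d1 g - d2 g) ->
       forall g, d1 g = d2 g).

(* Main.v *)
Require Import Defs.
From mathcomp Require Import all_boot all_order all_algebra.
From mathcomp Require Import ring.
Import GRing.Theory.
Local Open Scope ring_scope.

Section S.
Variable A : comNzRingType.
Implicit Types u : HA A.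

Lemma crd_mul (M : 'M[A]_4) u k :
  crd (M *m u) k = \sum_(j < 4) M (inord k.-1) j * crd u j.+1.
Proof.
rewrite /crd mxE; apply: eq_bigr => j _ /=; by rewrite inord_val.
Qed.

Lemma crdB u v k : crd (u - v) k = crd u k - crd v k.
Proof. by rewrite /crd !mxE. Qed.

Ltac cmp := rewrite crdB crd_mul !big_ord_recl big_ord0 ?mxE -?val_eqE /= ?inordK //= /bump /= ?addn0 ?add1n ?addn1 /=; try ring.

Lemma al1 u : crd (mat_alpha A *m u - u) 1 = -2 * crd u 1.
Proof. rewrite /mat_alpha; cmp. Qed.
Lemma al3 u : crd (mat_alpha A *m u - u) 3 = -2 * crd u 3.
Proof. rewrite /mat_alpha; cmp. Qed.
Lemma be2 u : crd (mat_beta A *m u - u) 2 = -2 * crd u 2.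
Proof. rewrite /mat_beta; cmp. Qed.
Lemma be4 u : crd (mat_beta A *m u - u) 4 = -2 * crd u 4.
Proof. rewrite /mat_beta; cmp. Qed.
Lemma ga2 u : crd (mat_gamma A *m u - u) 2 = - crd u 1 - crd u 2.
Proof. rewrite /mat_gamma; cmp. Qed.
Lemma ga3 u : crd (mat_gamma A *m u - u) 3 = - crd u 3 - crd u 4.
Proof. rewrite /mat_gamma; cmp. Qed.
Lemma de1 u : crd (mat_delta A *m u - u) 1 = -2 * crd u 1 - crd u 2.
Proof. rewrite /mat_delta; cmp. Qed.
Lemma de4 u : crd (mat_delta A *m u - u) 4 = crd u 3 - 2 * crd u 4.
Proof. rewrite /mat_delta; cmp. Qed.


Lemma crd_col (f : nat -> A) k : (0 < k <= 4)%N -> crd (\col_(i < 4) f i) k = f k.-1.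
Proof. by case/andP=> k0 k4; rewrite /crd mxE inordK // prednK. Qed.

Lemma vec0 (u : HA A) : crd u 1 = 0 -> crd u 2 = 0 -> crd u 3 = 0 -> crd u 4 = 0 -> u = 0.
Proof.
move=> h1 h2 h3 h4; apply/matrixP => i j; rewrite mxE (ord1 j).
have e : forall (i : 'I_4), u i ord0 = crd u i.+1 by move=> i'; rewrite /crd /= inord_val.
rewrite e; case: i => [[|[|[|[|i]]]] Hi] //=.
Qed.

Lemma main : lemma2p3_for A.
Proof.
move=> G rho al be ga de [r1 rM] _ Ha Hb Hg Hd S.
have pc : forall u, crossed_hom rho (fun g => rho g *m u - u).
  by move=> u g h; rewrite rM mulmxBr mulmxA [RHS]addrC addrA subrK.
split.
- move=> d dc.
  pose c1 := crd (d de) 1 - crd (d al) 1.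
  pose c2 := crd (d ga) 2 - crd (d be) 2.
  pose c3 := crd (d ga) 3 - crd (d al) 3.
  pose c4 := crd (d be) 4 - crd (d de) 4.
  pose u : HA A := \col_(i < 4) nth 0 [:: -c1-c2; -c1; -c4; -c4-c3] i.
  have u1 : crd u 1 = -c1-c2 by rewrite crd_col.
  have u2 : crd u 2 = -c1 by rewrite crd_col.
  have u3 : crd u 3 = -c4 by rewrite crd_col.
  have u4 : crd u 4 = -c4-c3 by rewrite crd_col.
  exists (fun g => d g - (rho g *m u - u)); split; last first.
    by exists u => g; rewrite opprB addrC subrK.
  split.
    move=> g h; rewrite dc (pc u g h) mulmxBr; rewrite /=.
    by rewrite !mulmxBr opprD addrACA.
  rewrite !(crdB (d _)) Ha Hb Hg Hd al1 al3 be2 be4 ga2 ga3 de1 de4 u1 u2 u3 u4 /c1 /c2 /c3 /c4.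
  by split; [|split; [|split]]; ring.
- move=> d1 d2 [_ [h1 [h2 [h3 h4]]]] [_ [k1 [k2 [k3 k4]]]] [u Hu] g.
  have E : forall x k, crd (d1 x) k - crd (d2 x) k = crd (rho x *m u - u) k.
    by move=> x k; rewrite -crdB Hu.
  have e1 := E de 1%N; have e2 := E al 1%N; have e3 := E ga 2%N; have e4 := E be 2%N.
  have e5 := E ga 3%N; have e6 := E al 3%N; have e7 := E be 4%N; have e8 := E de 4%N.
  rewrite Ha Hb Hg Hd ?al1 ?al3 ?be2 ?be4 ?ga2 ?ga3 ?de1 ?de4 in e1 e2 e3 e4 e5 e6 e7 e8.
  have z2 : crd u 2 = 0.
    have : (crd (d1 de) 1 - crd (d1 al) 1) - (crd (d2 de) 1 - crd (d2 al) 1) = 0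
      by rewrite h1 k1 subr0.
    have -> : (crd (d1 de) 1 - crd (d1 al) 1) - (crd (d2 de) 1 - crd (d2 al) 1)
      = (crd (d1 de) 1 - crd (d2 de) 1) - (crd (d1 al) 1 - crd (d2 al) 1) by ring.
    rewrite e1 e2 => H; rewrite -[LHS]opprK -[RHS]oppr0 -H; ring.
  have z1 : crd u 1 = 0.
    have : (crd (d1 ga) 2 - crd (d1 be) 2) - (crd (d2 ga) 2 - crd (d2 be) 2) = 0
      by rewrite h2 k2 subr0.
    have -> : (crd (d1 ga) 2 - crd (d1 be) 2) - (crd (d2 ga) 2 - crd (d2 be) 2)
      = (crd (d1 ga) 2 - crd (d2 ga) 2) - (crd (d1 be) 2 - crd (d2 be) 2) by ring.
    rewrite e3 e4 z2 => H; rewrite -[LHS]opprK -[RHS]oppr0 -H; ring.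
  have z3 : crd u 3 = 0.
    have : (crd (d1 be) 4 - crd (d1 de) 4) - (crd (d2 be) 4 - crd (d2 de) 4) = 0
      by rewrite h4 k4 subr0.
    have -> : (crd (d1 be) 4 - crd (d1 de) 4) - (crd (d2 be) 4 - crd (d2 de) 4)
      = (crd (d1 be) 4 - crd (d2 be) 4) - (crd (d1 de) 4 - crd (d2 de) 4) by ring.
    rewrite e7 e8 => H; rewrite -[LHS]opprK -[RHS]oppr0 -H; ring.
  have z4 : crd u 4 = 0.
    have : (crd (d1 ga) 3 - crd (d1 al) 3) - (crd (d2 ga) 3 - crd (d2 al) 3) = 0
      by rewrite h3 k3 subr0.
    have -> : (crd (d1 ga) 3 - crd (d1 al) 3) - (crd (d2 ga) 3 - crd (d2 al) 3)
      = (crd (d1 ga) 3 - crd (d2 ga) 3) - (crd (d1 al) 3 - crd (d2 al) 3) by ring.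
    rewrite e5 e6 z3 => H; rewrite -[LHS]opprK -[RHS]oppr0 -H; ring.
  apply/eqP; rewrite -subr_eq0; apply/eqP.
  by rewrite Hu (@vec0 u z1 z2 z3 z4) mulmx0 subr0.
Qed.
End S.

Theorem lemma2p3 :
  lemma2p3_for int /\ (forall n : nat, (1 < n)%N -> lemma2p3_for 'Z_n).
Proof. by split; [exact: main | move=> n _; exact: main]. Qed.
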